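(* Let $(X,T)$ be a minimal topological dynamical system ($X$ compact metrisable, $T$ a group acting by homeomorphisms) with maximal equicontinuous factor map $\pi:X\to X_{max}$, let $e$ be a minimal idempotent of its Ellis semigroup, and let $\xi\in X_{max}$. The proximal relation restricted to $\pi^{-1}(\xi)$ is transitive if and only if every element of the little structure group $\Gamma_e$ fixes every point of $e(\pi^{-1}(\xi))$. In particular, the proximal relation on $X$ is transitive if and only if $\Gamma_e=\{e\}$.
   Context: The Ellis semigroup $E$ is the closure of $\{\alpha^t:t\in T\}$ in $X^X$ (pointwise convergence topology, composition as product); it has a smallest two-sided ideal $\ker E$. Minimal idempotents are the idempotents of $\ker E$; $J_{min}$ denotes the set of them. For a minimal idempotent $e$, the structure group is ${\mathcal H}_e=eEe$ (a group with identity $e$), and the little structure group $\Gamma_e$ is the subgroup of ${\mathcal H}_e$ generated by $eJ_{min}e=\{epe:p\in J_{min}\}$. Points $x,y$ are proximal if $\inf_{t} d(\alpha^t(x),\alpha^t(y))=0$ for a compatible metric $d$. *)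

(* Defs.v *)
From HB Require Import structures.
From mathcomp Require Import all_boot all_order all_algebra.
From mathcomp Require Import all_classical all_reals all_analysis.
Set Implicit Arguments. Unset Strict Implicit. Unset Printing Implicit Defensive.
Import Order.TTheory GRing.Theory Num.Theory.
Local Open Scope classical_set_scope.
Local Open Scope ring_scope.

(* A (left) action of the group T on the topological space X by homeomorphisms:
   alpha 1 = id, alpha (s*t) = alpha s o alpha t, every alpha t continuous
   (hence a homeomorphism with inverse alpha t^-1). *)
Definition tds_action (T : groupType) (X : topologicalType) (alpha : T -> X -> X) :=
  [/\ (forall x, alpha 1%g x = x),
      (forall s t x, alpha (s * t)%g x = alpha s (alpha t x)) &
      (forall t, continuous (alpha t))].

Definition orbit (T : groupType) (X : Type) (alpha : T -> X -> X) (x : X) : set X :=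
  [set alpha t x | t in [set: T]].

Definition minimal_system (T : groupType) (X : topologicalType) (alpha : T -> X -> X) :=
  forall x, closure (orbit alpha x) = [set: X].

Definition factor_map (T : groupType) (X Y : topologicalType)
  (alpha : T -> X -> X) (beta : T -> Y -> Y) (pi : X -> Y) :=
  [/\ continuous pi, pi @` [set: X] = [set: Y] &
      (forall t x, pi (alpha t x) = beta t (pi x))].

Definition equicontinuous_system (R : realType) (T : groupType)
  (Y : pseudoMetricType R) (beta : T -> Y -> Y) :=
  forall eps : R, 0 < eps -> exists2 delta : R, 0 < delta &
    forall y y' t, ball y delta y' -> ball (beta t y) eps (beta t y').

Definition compact_metric_equicontinuous (R : realType) (T : groupType)
  (Y : pseudoMetricType R) (beta : T -> Y -> Y) :=
  [/\ compact [set: Y], hausdorff_space Y, tds_action beta &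
      equicontinuous_system beta].

Definition is_max_equicontinuous_factor (R : realType) (T : groupType)
  (X Y : pseudoMetricType R) (alpha : T -> X -> X) (beta : T -> Y -> Y)
  (pi : X -> Y) :=
  [/\ compact_metric_equicontinuous beta, factor_map alpha beta pi &
      forall (Z : pseudoMetricType R) (gamma : T -> Z -> Z) (rho : X -> Z),
        compact_metric_equicontinuous gamma -> factor_map alpha gamma rho ->
        exists psi : Y -> Z, factor_map beta gamma psi /\
                             forall x, rho x = psi (pi x)].

Definition ellis (T : groupType) (X : topologicalType) (alpha : T -> X -> X)
  : set (X -> X) :=
  @closure {ptws X -> X} [set f : {ptws X -> X} | exists t, f = alpha t].

Definition two_sided_ideal (X : Type) (E I : set (X -> X)) :=
  [/\ I `<=` E, I !=set0 &
      forall p q, E p -> I q -> I (p \o q) /\ I (q \o p)].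

Definition ker_ellis (T : groupType) (X : topologicalType) (alpha : T -> X -> X)
  : set (X -> X) :=
  [set p | forall I, two_sided_ideal (ellis alpha) I -> I p].

Definition Jmin (T : groupType) (X : topologicalType) (alpha : T -> X -> X)
  : set (X -> X) :=
  [set p | ker_ellis alpha p /\ p \o p = p].

Definition structure_group (T : groupType) (X : topologicalType)
  (alpha : T -> X -> X) (e : X -> X) : set (X -> X) :=
  [set e \o p \o e | p in ellis alpha].

(* little structure group: subgroup of H_e generated by e J_min e,
   i.e. the smallest subset of H_e containing e J_min e and closed under
   products and inverses (taken in the group H_e with identity e) *)
Definition little_structure_group (T : groupType) (X : topologicalType)
  (alpha : T -> X -> X) (e : X -> X) : set (X -> X) :=
  [set g | forall S : set (X -> X),
     S `<=` structure_group alpha e ->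
     (forall p, Jmin alpha p -> S (e \o p \o e)) ->
     (forall g1 g2, S g1 -> S g2 -> S (g1 \o g2)) ->
     (forall g1 h, S g1 -> structure_group alpha e h ->
        g1 \o h = e -> h \o g1 = e -> S h) ->
     S g].

Definition proximal (R : realType) (T : groupType) (X : pseudoMetricType R)
  (alpha : T -> X -> X) (x y : X) :=
  forall eps : R, 0 < eps -> exists t, ball (alpha t x) eps (alpha t y).

(* Main.v *)
Require Import Defs.
From HB Require Import structures.
From mathcomp Require Import all_boot all_order all_algebra.
From mathcomp Require Import all_classical all_reals all_analysis.
Unset Printing Implicit Defensive.
Import Order.TTheory GRing.Theory Num.Theory.
Local Open Scope classical_set_scope.
Local Open Scope ring_scope.
Section Basics.
Variables (R : realType) (X : pseudoMetricType R).
Local Notation F := ({ptws X -> X}).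

Lemma evalC (x : X) : continuous (fun f : F => f x).
Proof. exact: (@proj_continuous X (fun _ => X) x). Qed.

Lemma ptws_cont (Z : topologicalType) (G : Z -> F) :
  (forall x, continuous (fun z => G z x)) -> continuous G.
Proof.
move=> h z; apply/cvg_sup => x.
by apply: (@continuous_comp_initial _ _ _ (fun f : X -> X => f x)); exact: h.
Qed.

Lemma nbhs_eval (Y : topologicalType) (g : X -> Y) (p : F) (x : X) (B : set Y) :
  continuous g -> nbhs (g (p x)) B -> nbhs p [set f : F | B (g (f x))].
Proof.
move=> gc hB; exact: (evalC x p _ (gc (p x) _ hB)).
Qed.

Lemma nbhs_ball_eval (p : F) (x : X) (eps : R) : 0 < eps ->
  nbhs p [set f : F | ball (p x) eps (f x)].
Proof.
move=> e0; have := @nbhs_eval X id p x (ball (p x) eps).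
by apply; [move=> ?; exact: cvg_id | exact: nbhsx_ballx].
Qed.

Lemma F_hausdorff : hausdorff_space X -> hausdorff_space F.
Proof. by move=> h; apply: (@hausdorff_product X (fun _ => X)). Qed.

Lemma F_compact : compact [set: X] -> compact [set: F].
Proof.
move=> hX; have := @tychonoff X (fun _ => X) (fun _ => setT) (fun _ => hX).
by congr compact; rewrite predeqE.
Qed.

End Basics.
Arguments evalC {R X}. Arguments ptws_cont {R X Z}. Arguments nbhs_eval {R X Y}.
Arguments nbhs_ball_eval {R X}. Arguments F_hausdorff {R X}. Arguments F_compact {R X}.

Lemma balls_eq (R : realType) (Y : pseudoMetricType R) (x y : Y) :
  hausdorff_space Y -> (forall eps : R, 0 < eps -> ball x eps y) -> x = y.
Proof.
move=> hY h; apply: close_eq => //; rewrite ball_close => eps.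
exact: h.
Qed.
Set Implicit Arguments.
Section Ellis.
Variables (R : realType) (T : groupType) (X : pseudoMetricType R) (alpha : T -> X -> X).
Hypotheses (hX : compact [set: X]) (hH : hausdorff_space X) (hact : tds_action alpha).
Local Notation F := ({ptws X -> X}).
Local Notation E := (ellis alpha).
Local Notation A0 := [set f : F | exists t, f = alpha t].

Lemma alpha_mulE s t x : alpha (s * t)%g x = alpha s (alpha t x).
Proof. by case: hact => _ h _; exact: h. Qed.
Lemma alpha1E x : alpha 1%g x = x.
Proof. by case: hact. Qed.
Lemma alpha_cont t : continuous (alpha t).
Proof. by case: hact. Qed.

Lemma E_alpha t : E (alpha t).
Proof. by apply: (@subset_closure F); exists t. Qed.

Lemma E_closed : closed (E : set F).
Proof. exact: closed_closure. Qed.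

Lemma E_compact : compact (E : set F).
Proof.
apply: (@subclosed_compact F _ setT) => //; first exact: E_closed.
exact: F_compact.
Qed.

Lemma closureE_sub (p : F) : @closure F E p -> E p.
Proof. by move=> h; apply: E_closed. Qed.

Lemma E_lmul t (p : X -> X) : E p -> E (alpha t \o p).
Proof.
move=> Ep B hB.
have gc : continuous (fun f : F => (alpha t \o f : F)).
  apply: ptws_cont => x /=.
  move=> f; exact: (@continuous_comp F X X (fun f => f x) (alpha t) f (evalC x f) (alpha_cont t _)).
have := Ep _ (gc p _ hB) => -[f [[s ->] /= hs]].
exists (alpha t \o alpha s); split => //; exists (t * s)%g.
by apply: funext => x; rewrite alpha_mulE.
Qed.

Lemma E_mul (p q : X -> X) : E p -> E q -> E (p \o q).
Proof.
move=> Ep Eq; apply: closureE_sub => B hB.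
have gc : continuous (fun f : F => (f \o q : F)).
  by apply: ptws_cont => x /=; exact: evalC.
have := Ep _ (gc p _ hB) => -[f [[s ->] /= hs]].
by exists (alpha s \o q); split => //; exact: E_lmul.
Qed.

Lemma E_id : E id.
Proof. by have := @E_alpha 1%g; congr E; apply: funext => x; rewrite alpha1E. Qed.

Lemma cluster_lemma (P : R -> T -> Prop) :
  (forall e1 e2 t, 0 < e1 -> e1 <= e2 -> P e1 t -> P e2 t) ->
  (forall eps, 0 < eps -> exists t, P eps t) ->
  exists2 p : X -> X, E p & forall eps, 0 < eps -> forall N : set F,
     nbhs (p : F) N -> exists t, P eps t /\ N (alpha t).
Proof.
move=> Pmono Pne.
pose G := filter_from [set eps : R | 0 < eps]
  (fun eps => [set f : F | exists2 t, P eps t & f = alpha t]).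
have GF : Filter G.
  apply: filter_from_filter; first by exists 1; rewrite /= ltr01.
  move=> i j /= i0 j0; exists (Num.min i j) => /=; first by rewrite lt_min i0.
  move=> f [t Pt ->]; split; exists t => //; apply: (Pmono (Num.min i j)) => //;
    rewrite ?lt_min ?i0 ?j0 // ge_min lexx ?orbT //.
have GP : ProperFilter G.
  apply: filter_from_proper => // eps /= e0.
  by have [t Pt] := Pne _ e0; exists (alpha t); exists t.
have GE : G E.
  exists 1; first by rewrite /= ltr01.
  by move=> f [t _ ->]; exact: E_alpha.
have [p [Ep clp]] := E_compact GP GE.
exists p => // eps e0 N hN.
have GA : G [set f : F | exists2 t, P eps t & f = alpha t] by exists eps.
have [f [[t Pt ->] Nt]] := clp _ _ GA hN.
by exists t.
Qed.

Lemma prox_of_E (p : X -> X) x y : E p -> p x = p y -> proximal alpha x y.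
Proof.
move=> Ep pxy eps e0.
have e2 : 0 < eps / 2 by rewrite divr_gt0.
have N : nbhs (p : F) ([set f : F | ball (p x) (eps/2) (f x)] `&`
                       [set f : F | ball (p y) (eps/2) (f y)]).
  by apply: filterI; apply: nbhs_ball_eval.
have [f [[t ->] [h1 h2]]] := Ep _ N.
exists t; apply: (@ball_splitl _ _ (p x)); first exact: ball_sym.
by rewrite pxy; exact: ball_sym.
Qed.

Lemma E_of_prox x y : proximal alpha x y -> exists2 p, E p & p x = p y.
Proof.
move=> hp.
have [p Ep hN] := @cluster_lemma (fun eps t => ball (alpha t x) eps (alpha t y))
  (fun e1 e2 t _ le12 => @le_ball _ _ _ _ _ le12 _) hp.
exists p => //; apply: balls_eq => // eps e0.
have e2 : 0 < eps / 2 by rewrite divr_gt0.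
have e4 : 0 < eps / 2 / 2 by rewrite !divr_gt0.
have N : nbhs (p : F) ([set f : F | ball (p x) (eps/2) (f x)] `&`
                       [set f : F | ball (p y) (eps/2/2) (f y)]).
  by apply: filterI; apply: nbhs_ball_eval.
have [t [Pt [h1 h2]]] := hN _ e4 _ N.
apply: (@ball_split _ _ (alpha t x)) => //.
apply: (@ball_split _ _ (alpha t y)) => //; exact: ball_sym.
Qed.

Lemma minimal_rep : minimal_system alpha -> forall x0 x : X,
  exists2 p, E p & p x0 = x.
Proof.
move=> hmin x0 x.
have clx : closure (Defs.orbit alpha x0) x by rewrite hmin.
have ne : forall eps, 0 < eps -> exists t, ball x eps (alpha t x0).
  move=> eps e0.
  have [_ [[t _ <-] h]] := clx _ (nbhsx_ballx x _ e0).
  by exists t.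
have [p Ep hN] := @cluster_lemma (fun eps t => ball x eps (alpha t x0))
  (fun e1 e2 t _ le12 => @le_ball _ _ _ _ _ le12 _) ne.
exists p => //; apply: balls_eq => // eps e0.
have e2 : 0 < eps / 2 by rewrite divr_gt0.
have [t [Pt h1]] := hN _ e2 _ (nbhs_ball_eval p x0 _ e2).
by apply: (@ball_splitl _ _ (alpha t x0)).
Qed.

Lemma pi_eq (Y : pseudoMetricType R) (beta : T -> Y -> Y) (pi : X -> Y) :
  hausdorff_space Y -> tds_action beta -> equicontinuous_system beta ->
  factor_map alpha beta pi ->
  forall (p : X -> X) x y, E p -> p x = p y -> pi x = pi y.
Proof.
move=> hY [b1 bM _] heq [pic _ piE] p x y Ep pxy.
apply: balls_eq => // eps e0.
have [d d0 hd] := heq eps e0.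
have d2 : 0 < d / 2 by rewrite divr_gt0.
have N : nbhs (p : F) ([set f : F | ball (pi (p x)) (d/2) (pi (f x))] `&`
                       [set f : F | ball (pi (p y)) (d/2) (pi (f y))]).
  by apply: filterI; apply: nbhs_eval => //; exact: nbhsx_ballx.
have [f [[t ->] [h1 h2]]] := Ep _ N.
have hb : ball (beta t (pi x)) d (beta t (pi y)).
  rewrite -!piE; apply: (@ball_splitl _ _ (pi (p x))); first exact: ball_sym.
  by rewrite pxy; exact: ball_sym.
have := hd _ _ (t^-1)%g hb.
by rewrite -!bM mulVg !b1.
Qed.
Definition lideal (L : set (X -> X)) :=
  [/\ L `<=` E, L !=set0 & forall q l, E q -> L l -> L (q \o l)].

Lemma Eq_closed (l : X -> X) : closed ([set q \o l | q in E] : set F).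
Proof.
apply: compact_closed; first exact: F_hausdorff.
apply: (@continuous_compact F F (fun q : F => (q \o l : F)) E); last exact: E_compact.
apply: continuous_subspaceT.
by apply: ptws_cont => x /=; exact: evalC.
Qed.

Lemma Eq_lideal (l : X -> X) : E l -> lideal [set q \o l | q in E].
Proof.
move=> El; split.
- by move=> _ [q Eq <-]; exact: E_mul.
- by exists l; exists id => //; exact: E_id.
- by move=> q _ Eq [q' Eq' <-]; exists (q \o q') => //; exact: E_mul.
Qed.

Lemma exists_min_lideal : exists M, lideal M /\
  forall N, lideal N -> N `<=` M -> M `<=` N.
Proof.
pose Lt := {L : set (X -> X) | lideal L /\ closed (L : set F)}.
have EL : lideal E.
  split => //; first by exists id; exact: E_id.
  by move=> q l Eq El; exact: E_mul.
pose t0 : Lt := exist _ E (conj EL E_closed).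
pose Rl := fun (a b : Lt) => `[< proj1_sig b `<=` proj1_sig a >].
have [| | |t tmax] := @ZL_preorder Lt t0 Rl.
- by move=> a; apply/asboolP.
- move=> a b c /asboolP h1 /asboolP h2; apply/asboolP.
  exact: subset_trans h2 h1.
- move=> A Atot.
  have [[a0 Aa0]|A0] := pselect (A !=set0); last first.
    by exists t0 => s As; exfalso; apply: A0; exists s.
  pose I := \bigcap_(a in A) proj1_sig a.
  have Icl : closed (I : set F).
    apply: closed_bigI => a _; by case: (proj2_sig a).
  have Isub : I `<=` E.
    move=> f If; have := If a0 Aa0; case: (proj2_sig a0) => -[+ _ _] _; exact.
  have Ine : I !=set0.
    pose G := filter_from A (fun a : Lt => (proj1_sig a : set F)).
    have GF : Filter G.
      apply: filter_from_filter; first by exists a0.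
      move=> a b Aa Ab; have [/asboolP h|/asboolP h] := Atot a b Aa Ab.
        exists b => // f bf; split => //; exact: h.
      exists a => // f af; split => //; exact: h.
    have GP : ProperFilter G.
      apply: filter_from_proper => // a _.
      by case: (proj2_sig a) => -[_ + _] _.
    have GE : G E.
      exists a0 => // f af; case: (proj2_sig a0) => -[+ _ _] _; exact.
    have [p [Ep clp]] := E_compact GP GE.
    exists p => a Aa; case: (proj2_sig a) => _ acl; apply: acl => B hB.
    by apply: clp => //; exists a.
  have Ilid : lideal I.
    split => // q l Eq Il a Aa.
    case: (proj2_sig a) => -[_ _ +] _; apply => //; exact: Il.
  exists (exist _ I (conj Ilid Icl)) => s As; apply/asboolP => /=.
  exact: bigcap_inf.
- exists (proj1_sig t); split; first by case: (proj2_sig t).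
  move=> N Nlid NM.
  have [n Nn] : N !=set0 by case: Nlid.
  have En : E n by case: Nlid => + _ _; apply.
  pose N' : Lt := exist _ _ (conj (Eq_lideal En) (@Eq_closed n)).
  have N'N : [set q \o n | q in E] `<=` N.
    by move=> _ [q Eq <-]; case: Nlid => _ _; apply.
  have /asboolP h : Rl t N'.
    by apply/asboolP => f /N'N /NM.
  have := tmax N' (asboolT (subset_trans N'N NM)).
  by move/asboolP => h' f /h' /N'N.
Qed.

Lemma KEY (e : X -> X) : ker_ellis alpha e ->
  forall p, E p -> exists2 r, E r & forall x, r (p (e x)) = e x.
Proof.
move=> ke p Ep.
have [M [[MsubE [m0 Mm0] Mcl] Mmin]] := exists_min_lideal.
pose I2 := [set f | exists m s, [/\ M m, E s & f = m \o s]].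
have I2id : two_sided_ideal (ellis alpha) I2.
  split.
  - by move=> _ [m [s [Mm Es ->]]]; apply: E_mul => //; exact: MsubE.
  - by exists m0; exists m0, id; split => //; exact: E_id.
  - move=> q f Eq [m [s [Mm Es ->]]]; split.
      by exists (q \o m), s; split => //; exact: Mcl.
    by exists m, (s \o q); split => //; exact: E_mul.
have [m [s [Mm Es he]]] := ke _ I2id.
pose N := [set f | exists2 q, E q & f = q \o p \o e].
pose N' := [set m' | M m' /\ N (m' \o s)].
have N'lid : lideal N'.
  split.
  - by move=> f [/MsubE].
  - exists (p \o m); split; first exact: Mcl.
    by exists id; [exact: E_id | rewrite he].
  - move=> q f Eq [Mf [q' Eq' hq']]; split; first exact: Mcl.
    exists (q \o q'); first exact: E_mul.
    by apply: funext => x /=; exact: (congr1 (fun g => q (g x)) hq').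
have [_ [q Eq hq]] := Mmin N' N'lid (fun f (hf : N' f) => proj1 hf) m Mm.
exists q => // x.
by have := congr1 (@^~ x) (etrans he hq).
Qed.
Lemma E_ideal : two_sided_ideal E E.
Proof.
split => //; first by exists id; exact: E_id.
by move=> p q Ep Eq; split; exact: E_mul.
Qed.

Lemma ker_sub p : ker_ellis alpha p -> E p.
Proof. by move=> h; apply: h; exact: E_ideal. Qed.

Lemma ker_mulL p q : ker_ellis alpha q -> E p -> ker_ellis alpha (p \o q).
Proof. by move=> kq Ep I hI; case: (hI) => _ _ h; case: (h p q Ep (kq I hI)). Qed.

Lemma ker_mulR p q : ker_ellis alpha q -> E p -> ker_ellis alpha (q \o p).
Proof. by move=> kq Ep I hI; case: (hI) => _ _ h; case: (h p q Ep (kq I hI)). Qed.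

Lemma prox_sym x y : proximal alpha x y -> proximal alpha y x.
Proof. by move=> h eps e0; have [t ht] := h eps e0; exists t; exact: ball_sym. Qed.

Section Alg.
Variable e : X -> X.
Hypotheses (ke : ker_ellis alpha e) (hee : e \o e = e).
Local Notation H := (structure_group alpha e).
Local Notation G := (little_structure_group alpha e).

Lemma ee x : e (e x) = e x.
Proof. exact: (congr1 (@^~ x) hee). Qed.

Lemma Ee : E e.
Proof. exact: ker_sub. Qed.

Lemma H_eL g : H g -> forall y, e (g y) = g y.
Proof. by move=> [p _ <-] y /=; rewrite ee. Qed.
Lemma H_eR g : H g -> forall y, g (e y) = g y.
Proof. by move=> [p _ <-] y /=; rewrite ee. Qed.
Lemma H_E g : H g -> E g.
Proof.
move=> [p Ep <-]; apply: E_mul; last exact: Ee.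
apply: E_mul => //; exact: Ee.
Qed.
Lemma H_mul g1 g2 : H g1 -> H g2 -> H (g1 \o g2).
Proof.
move=> [p Ep <-] [q Eq <-]; exists (p \o e \o e \o q).
  apply: E_mul => //; apply: E_mul; last exact: Ee.
  apply: E_mul => //; exact: Ee.
by [].
Qed.
Lemma H_of p : E p -> H (e \o p \o e).
Proof. by move=> Ep; exists p. Qed.

Lemma H_linv g : H g -> exists2 h, H h & forall z, h (g z) = e z.
Proof.
move=> [p Ep <-].
have [r Er hr] := KEY ke (E_mul Ee Ep).
exists (e \o r \o e); first exact: H_of.
by move=> z /=; rewrite ee hr ee.
Qed.

Lemma H_inv g : H g -> exists2 h, H h & g \o h = e /\ h \o g = e.
Proof.
move=> Hg; have [h Hh hg] := H_linv Hg.
have [h' Hh' hh] := H_linv Hh.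
exists h => //; split; apply: funext => z /=; last exact: hg.
by rewrite -(H_eL Hg) -hh hg (H_eL Hh).
Qed.

Lemma G_gen p : Jmin alpha p -> G (e \o p \o e).
Proof. by move=> Jp S _ h _ _; exact: h. Qed.
Lemma G_mul g1 g2 : G g1 -> G g2 -> G (g1 \o g2).
Proof. by move=> h1 h2 S a b c d; apply: (c); [exact: (h1 S a b c d)|exact: (h2 S a b c d)]. Qed.
Lemma G_inv g h : G g -> H h -> g \o h = e -> h \o g = e -> G h.
Proof. by move=> hg Hh h1 h2 S a b c d; apply: (d g) => //; exact: (hg S a b c d). Qed.
Lemma G_sub g : G g -> H g.
Proof.
move=> hg; apply: hg => //.
- by move=> p [kp _]; apply: H_of; exact: ker_sub.
- by move=> ? ?; exact: H_mul.
Qed.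
Lemma G_e : G e.
Proof.
have h := G_gen (conj ke hee).
have E3 : e \o e \o e = e by apply: funext => z /=; rewrite !ee.
by rewrite E3 in h.
Qed.

Lemma gamma_lemma u a : Jmin alpha u -> E a ->
  exists2 c, G c & forall z, e (u (a (e z))) = c (e (a (e z))).
Proof.
move=> [ku uu] Ea.
have Hg := H_of Ea.
have [h Hh [gh hg]] := H_inv Hg.
have hgz z : h (e (a (e z))) = e z by exact: (congr1 (@^~ z) hg).
have ghz z : e (a (e (h z))) = e z by exact: (congr1 (@^~ z) gh).
pose w := a \o e \o h.
have W1 z : w (e z) = w z by rewrite /w /= (H_eR Hh).
have W2 z : e (w z) = e z by rewrite /w /= ghz.
have W3 z : w (w z) = w z.
  by rewrite /w /= -(H_eR Hh (a _)) hgz ee.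
have kw : ker_ellis alpha w.
  apply: (@ker_mulL a (e \o h)) => //; apply: ker_mulR => //; exact: H_E.
have Ew : E w by exact: ker_sub.
have Eu : E u by exact: ker_sub.
pose c := e \o u \o w.
have Hc : H c.
  have -> : c = e \o (u \o w) \o e by apply: funext => z; rewrite /c /= W1.
  exact: (H_of (E_mul Eu Ew)).
have [k Hk [ck kc]] := H_inv Hc.
have ckz z : e (u (w (k z))) = e z by exact: (congr1 (@^~ z) ck).
have kcz z : k (e (u (w z))) = e z by exact: (congr1 (@^~ z) kc).
pose v := w \o k \o u.
have Jv : Jmin alpha v.
  split.
    apply: (@ker_mulR u (w \o k)) => //; apply: (@ker_mulR k w) => //; exact: H_E.
  apply: funext => z; rewrite /v /=.
  by rewrite -(H_eR Hk (u (w _))) ckz (H_eR Hk).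
have Hv := H_of (ker_sub (proj1 Jv)).
have [j Hj [vj jv]] := H_inv Hv.
have Gj : G j by apply: (G_inv (G_gen Jv)).
have key : c \o (e \o v \o e) = e \o u \o e.
  apply: funext => z; rewrite /c /v /=.
  by rewrite W1 W3 ckz.
exists ((e \o u \o e) \o j).
  by apply: G_mul => //; exact: G_gen.
move=> z.
have -> : (e \o u \o e) \o j = c.
  rewrite -key; apply: funext => y /=.
  have := congr1 (@^~ y) vj => /= ->.
  by rewrite /c /= W1.
by rewrite /c /= W1 /w /= -(H_eR Hh (a (e z))) hgz ee.
Qed.
Section Dyn.
Variables (Y : pseudoMetricType R) (beta : T -> Y -> Y) (pi : X -> Y).
Hypotheses (hY : hausdorff_space Y) (hb : tds_action beta)
  (heqb : equicontinuous_system beta) (hfac : factor_map alpha beta pi).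

Lemma piJ u z : Jmin alpha u -> pi (u z) = pi z.
Proof.
move=> [ku uu]; apply: (@pi_eq Y beta pi hY hb heqb hfac u (u z) z (ker_sub ku)).
exact: (congr1 (@^~ z) uu).
Qed.

Lemma pie z : pi (e z) = pi z.
Proof. exact: piJ. Qed.

Lemma dirA xi :
  (forall x y z, pi x = xi -> pi y = xi -> pi z = xi ->
      proximal alpha x y -> proximal alpha y z -> proximal alpha x z) ->
  forall g, G g -> forall x, pi x = xi -> g (e x) = e x.
Proof.
move=> htr g hg.
pose S := fun g => [/\ H g, (forall z, pi (g z) = pi z) &
   (forall x, pi x = xi -> proximal alpha (e x) (g (e x)))].
have Sg : S g.
  apply: hg.
  - by move=> f [].
  - move=> p Jp; split.
    + exact: H_of (ker_sub (proj1 Jp)).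
    + by move=> z /=; rewrite pie piJ // pie.
    + move=> x px.
      have pex : pi (e x) = xi by rewrite pie.
      apply: (htr _ (p (e x))) => //.
      * by rewrite piJ.
      * by rewrite /= ?ee pie piJ.
      * apply: (prox_of_E _ _ (ker_sub (proj1 Jp))).
        by have := congr1 (@^~ (e x)) (proj2 Jp).
      * apply: (prox_of_E _ _ Ee) => /=; by rewrite !ee.
  - move=> g1 g2 [H1 p1 x1] [H2 p2 x2]; split.
    + exact: H_mul.
    + by move=> z /=; rewrite p1 p2.
    + move=> x px.
      have pex : pi (e x) = xi by rewrite pie.
      apply: (htr _ (g2 (e x))) => //.
      * by rewrite p2.
      * by rewrite /= p1 p2.
      * exact: x2.
      * have := x1 (g2 (e x)); rewrite (H_eL H2) /=; apply.
        by rewrite p2.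
  - move=> g1 h [H1 p1 x1] Hh gh hg1; split => //.
    + by move=> z; rewrite -p1; have := congr1 (@^~ z) gh => /= ->; rewrite pie.
    + move=> x px.
      have py : pi (h (e x)) = xi.
        by rewrite -p1; have := congr1 (@^~ (e x)) gh => /= ->; rewrite !pie.
      have := x1 _ py; rewrite (H_eL Hh).
      have := congr1 (@^~ (e x)) gh => /= ->; rewrite ee.
      exact: prox_sym.
case: Sg => Hg _ xg x px.
have [p Ep hp] := E_of_prox (xg x px).
have [r Er hr] := KEY ke Ep.
have h1 := hr x.
have h2 := hr (g (e x)).
rewrite (H_eL Hg) in h2.
by rewrite -{1}h2 -hp h1.
Qed.

End Dyn.

Lemma dirB (hmin : minimal_system alpha) (fib : X -> Prop) :
  (forall g, G g -> forall x, fib x -> g (e x) = e x) ->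
  forall x y z, fib x -> fib y -> fib z ->
    proximal alpha x y -> proximal alpha y z -> proximal alpha x z.
Proof.
move=> hfix.
have pe : forall x y, fib x -> fib y -> proximal alpha x y -> e x = e y.
  move=> x y fx fy pxy.
  have [p Ep hp] := E_of_prox pxy.
  have Hm := H_of Ep.
  have [k Hk [mk km]] := H_inv Hm.
  have mkz w : e (p (e (k w))) = e w by exact: (congr1 (@^~ w) mk).
  pose u := k \o (e \o p).
  have Ju : Jmin alpha u.
    split.
      apply: (@ker_mulL k (e \o p)); last exact: H_E.
      exact: (@ker_mulR p e).
    apply: funext => w; rewrite /u /=.
    by rewrite -(H_eL Hk (e (p w))) mkz ee (H_eL Hk).
  have [p1 Ep1 h1] := minimal_rep hmin (e x) x.
  have [p2 Ep2 h2] := minimal_rep hmin (e x) y.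
  have [c1 G1 hc1] := gamma_lemma Ju Ep1.
  have [c2 G2 hc2] := gamma_lemma Ju Ep2.
  have e1 := hc1 (e x); rewrite ee h1 in e1.
  have e2 := hc2 (e x); rewrite ee h2 in e2.
  have uxy : u x = u y by rewrite /u /= hp.
  by rewrite -(hfix _ G1 _ fx) -e1 uxy e2 (hfix _ G2 _ fy).
move=> x y z fx fy fz pxy pyz.
apply: (prox_of_E _ _ Ee).
by rewrite (pe _ _ fx fy pxy) (pe _ _ fy fz pyz).
Qed.
End Alg. End Ellis.

Theorem mainTheorem3 (R : realType) (T : groupType) (X : pseudoMetricType R)
  (alpha : T -> X -> X) (Xmax : pseudoMetricType R) (beta : T -> Xmax -> Xmax)
  (pi : X -> Xmax) (e : X -> X) (xi : Xmax) :
  compact [set: X] -> hausdorff_space X ->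
  tds_action alpha -> minimal_system alpha ->
  is_max_equicontinuous_factor alpha beta pi ->
  Jmin alpha e ->
  ((forall x y z, pi x = xi -> pi y = xi -> pi z = xi ->
      proximal alpha x y -> proximal alpha y z -> proximal alpha x z) <->
   (forall g, little_structure_group alpha e g ->
      forall x, pi x = xi -> g (e x) = e x))
  /\
  ((forall x y z, proximal alpha x y -> proximal alpha y z -> proximal alpha x z) <->
   little_structure_group alpha e = [set e]).
Proof.
move=> hX hH hact hmin [[_ hY hb heqb] hfac _] [ke hee].
have ee x : e (e x) = e x := congr1 (@^~ x) hee.
have dA := dirA hX hH hact ke hee hY hb heqb hfac.
have dB := dirB hX hH hact ke hee hmin.
split; split.
- by move=> htr; exact: dA.
- by move=> hfix x y z px py pz; exact: (dB (fun w => pi w = xi) hfix x y z px py pz).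
- move=> htr; apply: funext => g; apply: propext; split => [hg|->]; last first.
    exact: G_e.
  have [p Ep hgp] := G_sub hact ke hg.
  apply: funext => x.
  have hx := dA (pi x) (fun a b c _ _ _ => htr a b c) g hg x erefl.
  by rewrite -hx -hgp /= ee.
- move=> hG x y z pxy pyz.
  have [p Ep hp] := E_of_prox hX hH pxy.
  have [q Eq hq] := E_of_prox hX hH pyz.
  have fxy := pi_eq hY hb heqb hfac x y Ep hp.
  have fyz := pi_eq hY hb heqb hfac y z Eq hq.
  have hfix : forall g, little_structure_group alpha e g ->
      forall w, pi w = pi x -> g (e w) = e w.
    by move=> g hg w _; rewrite hG in hg; rewrite hg /= ee.
  apply: (dB (fun w => pi w = pi x) hfix x y z) => //.
  by rewrite -fyz fxy.
Qed.
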